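(* Let $F$ be a $4$-regular graph, let $D$ be a directed version of $F$, let $\mathbf{o}$ be a transitional orientation of $F$, and let $P$ be a circuit partition of $F$. Then for every closed walk $W$ of $F$, \[\sigma(D,W)\cdot \Delta_{D,\mathbf{o}}|_{\tau(P)} = \sigma(\mathrm{Tch}_{\mathbf{o}}(P),\pi_P(W)),\] where the $\sigma$-vectors are regarded as row vectors.
   Context: Graphs: $G=(V,H,E,\epsilon)$ with finite sets of vertices $V$ and half-edges $H$, a partition $E$ of $H$ into unordered pairs (edges), and $\epsilon:H\to V$; loops and multiple edges allowed. A directed version orders each edge as (tail, head). A single transition is an unordered pair of distinct half-edges incident with a common vertex; a directed single transition is such an ordered pair. A closed walk is a sequence $((h_1,h_2),\dots,(h_{n-1},h_n))$ of directed single transitions with $\{h_2,h_3\},\{h_4,h_5\},\dots,\{h_n,h_1\}$ edges, up to cyclic shift. For a directed version $D$ and closed walk $W$, $\sigma(D,W)\in\mathbb Z^{E}$ counts, at each edge $e$, traversals of $e$ along its direction minus traversals against it. A circuit is a nonempty closed walk using each half-edge at most once, with orientation forgotten. $F$ is $4$-regular if every vertex is incident with exactly $4$ half-edges. A transition at $v$ is a partition of the four half-edges at $v$ into two single transitions; $\mathfrak T(F)$ is the set of all transitions. A circuit partition $P$ is a set of circuits of $F$ such that every half-edge lies in exactly one single transition of exactly one circuit of $P$; $\tau(P)$ is the set of transitions both of whose single transitions occur in circuits of $P$ (one transition per vertex). The touch-graph $\mathrm{Tch}(P)$ has vertex set $P$, half-edge set the set of single transitions occurring in circuits of $P$, edge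 set $\tau(P)$ (each transition being a pair of single transitions), and maps each single transition to the circuit containing it. A transitional orientation $\mathbf o$ assigns to each $t\in\mathfrak T(F)$ one of its two single transitions $\mathbf o(t)$. $\mathrm{Tch}_{\mathbf o}(P)$ is the directed version of $\mathrm{Tch}(P)$ in which each edge $t$ has head $\mathbf o(t)$ and tail the other single transition of $t$. For a closed walk $W$ of $F$, $\pi_P(W)$ is obtained by replacing each directed single transition $(h,h')$ of $W$ by $(s,s')$, where $s,s'$ are the single transitions of circuits of $P$ containing $h$, $h'$ respectively, and deleting the pairs with $s=s'$; it is a closed walk of $\mathrm{Tch}(P)$ in which each remaining pair $(s,s')$ traverses the edge $\{s,s'\}\in\tau(P)$ from half-edge $s$ to half-edge $s'$. The edge-transition incidence matrix $\Delta_{D,\mathbf o}$ is the $E(F)\times\mathfrak T(F)$ matrix over $\mathbb Q$ whose $(e,t)$ entry is $1$ if $e\cap\mathbf o(t)=\{h\}$ with $h$ the tail of $e$ in $D$, $-1$ if $e\cap \mathbf o(t)=\{h\}$ with $h$ the head of $e$ in $D$, and $0$ otherwise. For $Y\subseteq\mathfrak T(F)$, $A|_Y$ denotes the column restriction to $Y$. *)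

(* Defs.v *)
From mathcomp Require Import all_boot all_order all_algebra.
Set Implicit Arguments. Unset Strict Implicit. Unset Printing Implicit Defensive.
Import GRing.Theory Num.Theory.
Local Open Scope ring_scope.

(* A graph (V,H,E,eps): finite vertex type V, finite half-edge type H,
   the partition E of H into unordered pairs given by a fixed-point-free
   involution [mate] (the edges are the sets {h, mate h}), eps : H -> V. *)
Section Defs.
Variables (V H : finType).

Definition is_graph (mate : H -> H) : Prop :=
  involutive mate /\ forall h, mate h != h.

Definition edges (mate : H -> H) : {set {set H}} :=
  [set [set h; mate h] | h : H].

Definition hedges_at (eps : H -> V) (v : V) : {set H} := [set h | eps h == v].

Definition four_regular (eps : H -> V) : Prop :=
  forall v, #|hedges_at eps v| = 4%N.

(* directed version: tl h <-> h is the tail of its edge; head is the other *)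
Definition directed_version (mate : H -> H) (tl : pred H) : Prop :=
  forall h, tl (mate h) = ~~ tl h.

Definition single_transition (eps : H -> V) (s : {set H}) : bool :=
  (#|s| == 2%N) && [exists v, s \subset hedges_at eps v].

Definition transitions (eps : H -> V) : {set {set {set H}}} :=
  [set t : {set {set H}} | [exists v,
     [&& partition t (hedges_at eps v), #|t| == 2%N &
         [forall s in t, single_transition eps s]]]].

Definition transitional_orientation (eps : H -> V)
    (o : {set {set H}} -> {set H}) : Prop :=
  forall t, t \in transitions eps -> o t \in t.

Definition dst (eps : H -> V) (p : H * H) : bool :=
  (p.1 != p.2) && (eps p.1 == eps p.2).

(* closed walk ((h1,h2),...,(h_{n-1},h_n)), with {h2,h3},...,{hn,h1} edges *)
Definition closed_walk (mate : H -> H) (eps : H -> V) (W : seq (H * H)) : bool :=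
  all (dst eps) W && cycle (fun p q : H * H => mate p.2 == q.1) W.

(* edge traversals of a closed walk: (h2,h3), (h4,h5), ..., (hn,h1) *)
Definition walk_trav (W : seq (H * H)) : seq (H * H) :=
  zip (unzip2 W) (rot 1 (unzip1 W)).

Definition walk_hedges (W : seq (H * H)) : seq H :=
  flatten [seq [:: p.1; p.2] | p <- W].

(* circuit: nonempty closed walk using each half-edge at most once
   (orientation/cyclic shift forgotten: any representative is taken) *)
Definition circuit (mate : H -> H) (eps : H -> V) (c : seq (H * H)) : bool :=
  [&& closed_walk mate eps c, c != [::] & uniq (walk_hedges c)].

(* circuit partition, given as a list of representatives of its circuits:
   every half-edge lies in exactly one single transition of exactly one
   circuit *)
Definition circuit_partition (mate : H -> H) (eps : H -> V)
    (P : seq (seq (H * H))) : Prop :=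
  all (circuit mate eps) P /\
  forall h, count (fun c => h \in walk_hedges c) P = 1%N.

Definition SP (P : seq (seq (H * H))) : {set {set H}} :=
  [set [set p.1; p.2] | p in flatten P].

Definition sP (P : seq (seq (H * H))) (h : H) : {set H} :=
  odflt set0 [pick s in SP P | h \in s].

Definition tauP (eps : H -> V) (P : seq (seq (H * H))) : {set {set {set H}}} :=
  [set t in transitions eps | t \subset SP P].

(* pi_P(W), as a sequence of edge traversals (s,s') of Tch(P) *)
Definition pi_walk (P : seq (seq (H * H))) (W : seq (H * H))
    : seq ({set H} * {set H}) :=
  [seq (sP P p.1, sP P p.2) | p <- [seq p <- W | sP P p.1 != sP P p.2]].

(* Tch_o(P): the edge t in tauP(P) has head o t, tail the other single
   transition; tch_tail s <-> s is the tail of its edge *)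
Definition tch_tail (eps : H -> V) (o : {set {set H}} -> {set H})
    (P : seq (seq (H * H))) (s : {set H}) : bool :=
  [exists t in tauP eps P, (s \in t) && (o t != s)].

Definition Delta (tl : pred H) (o : {set {set H}} -> {set H})
    (e : {set H}) (t : {set {set H}}) : rat :=
  \sum_(h | e :&: o t == [set h]) (if tl h then 1 else -1).

End Defs.

(* sigmaV(D, W)_e for a walk given by its sequence of edge traversals (a,b)
   (edge {a,b} traversed from a to b) in a directed graph whose tails are
   given by tl: traversals along the direction minus traversals against. *)
Definition sigmaV (X : finType) (tl : pred X) (tr : seq (X * X)) (e : {set X})
    : rat :=
  \sum_(p <- tr) (if [set p.1; p.2] == e then (if tl p.1 then 1 else -1) else 0).

(* Main.v *)
Require Import Defs.
From mathcomp Require Import all_boot all_order all_algebra.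
Import GRing.Theory Num.Theory.
Local Open Scope ring_scope.
Set Implicit Arguments. Unset Strict Implicit.

Lemma count1_eq (T : eqType) (a : pred T) (s : seq T) x y :
  count a s = 1%N -> x \in s -> y \in s -> a x -> a y -> x = y.
Proof.
elim: s => [|z s IH] //=.
case az: (a z) => /=.
- move=> /eqP; rewrite add1n eqSS => /eqP c0.
  have nh: ~~ has a s by rewrite has_count c0.
  have ins w : w \in z :: s -> a w -> w = z.
    rewrite inE => /orP[/eqP //| ws aw]; case/negP: nh; apply/hasP; by exists w.
  by move=> xs ys ax ay; rewrite (ins x) // (ins y).
- rewrite add0n => c1.
  have ins w : w \in z :: s -> a w -> w \in s.
    by rewrite inE => /orP[/eqP wz|//]; rewrite wz az.
  by move=> xs ys ax ay; apply: IH => //; [apply: ins xs ax | apply: ins ys ay].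
Qed.

Lemma mem_wh (H : finType) (c : seq (H * H)) p h :
  p \in c -> h \in [:: p.1; p.2] -> h \in walk_hedges c.
Proof. by move=> pc hp; apply/flatten_mapP; exists p. Qed.

Lemma wh_uniq (H : finType) (c : seq (H*H)) p p' h : uniq (walk_hedges c) ->
  p \in c -> p' \in c ->
  h \in [:: p.1; p.2] -> h \in [:: p'.1; p'.2] -> p = p'.
Proof.
elim: c => [|z c IH] //.
have -> : walk_hedges (z :: c) = z.1 :: z.2 :: walk_hedges c by [].
rewrite /= => /and3P[n1 n2 u].
have nz k : k \in [:: z.1; z.2] -> k \in walk_hedges c -> False.
  rewrite !inE => /orP[] /eqP -> kw.
  - by case/negP: n1; rewrite inE kw orbT.
  - by case/negP: n2.
move=> pz p'z hp hp'.
move: pz p'z; rewrite !in_cons => /predU1P[pz|pc] /predU1P[p'z|pc']; subst => //.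
- by case: (nz h hp (mem_wh pc' hp')).
- by case: (nz h hp' (mem_wh pc hp)).
- exact: IH.
Qed.

Lemma trav_mate (H : finType) (mate : H -> H) (y z : H * H) s :
  path (fun p q : H * H => mate p.2 == q.1) y (rcons s z) ->
  all [pred q : H * H | mate q.1 == q.2] (zip (y.2 :: unzip2 s) (rcons (unzip1 s) z.1)).
Proof.
elim: s y => [|w s IH] y /=; first by rewrite andbT => ->.
by case/andP=> -> /IH.
Qed.


Section S.
Variables (V H : finType) (mate : H -> H) (eps : H -> V).
Variable (P : seq (seq (H * H))).
Hypothesis hP : circuit_partition mate eps P.

Lemma SP_uniq s1 s2 h : s1 \in SP P -> s2 \in SP P -> h \in s1 -> h \in s2 -> s1 = s2.
Proof.
case: hP => /allP hc hcnt.
case/imsetP=> p /flattenP[c cP pc] ->; case/imsetP=> p' /flattenP[c' c'P p'c] ->.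
rewrite !inE => hp hp'.
have hp1 : h \in [:: p.1; p.2] by rewrite !inE.
have hp1' : h \in [:: p'.1; p'.2] by rewrite !inE.
have ecc : c = c'.
  apply: (count1_eq (hcnt h)) => //; exact: mem_wh hp1 || exact: mem_wh hp1'.
subst c'.
have /and3P[_ _ u] := hc c cP.
by rewrite (wh_uniq u pc p'c hp1 hp1').
Qed.

Lemma sP_spec h : sP P h \in SP P /\ h \in sP P h.
Proof.
case: hP => _ hcnt.
have : has (fun c => h \in walk_hedges c) P by rewrite has_count hcnt.
case/hasP=> c cP /flatten_mapP[p pc hp].
rewrite /sP; case: pickP => [s /andP[]|] //.
move/(_ [set p.1; p.2]) => /=.
have -> : [set p.1; p.2] \in SP P by apply/imsetP; exists p => //; apply/flattenP; exists c.
by rewrite !inE in hp *; rewrite hp.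
Qed.

Lemma sP_uniq s h : s \in SP P -> h \in s -> s = sP P h.
Proof. by case: (sP_spec h) => a b sS hs; apply: SP_uniq sS a hs b. Qed.

End S.


Section S.
Variables (V H : finType) (mate : H -> H) (eps : H -> V).
Variable (P : seq (seq (H * H))).
Hypothesis hP : circuit_partition mate eps P.

Lemma tauP_E t : t \in tauP eps P ->
  exists v, [/\ partition t (hedges_at eps v), #|t| = 2%N & t \subset SP P].
Proof.
rewrite inE => /andP[]; rewrite inE => /existsP[v /and3P[pt /eqP c2 _]] sub.
by exists v.
Qed.

Lemma blk_in t D h : partition t D -> t \subset SP P -> h \in D -> sP P h \in t.
Proof.
case/and3P=> /eqP cv _ _ sub; rewrite -cv => /bigcupP[s st hs].
by rewrite -(sP_uniq hP (subsetP sub s st) hs).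
Qed.

Lemma blk_out t D h : partition t D -> sP P h \in t -> h \in D.
Proof.
case/and3P=> /eqP cv _ _ st; rewrite -cv; apply/bigcupP; exists (sP P h) => //.
by case: (sP_spec hP h).
Qed.

Lemma tauP_sub t t' D : partition t D -> partition t' D -> t \subset SP P ->
  t' \subset SP P -> t \subset t'.
Proof.
move=> pt pt' sub sub'; apply/subsetP=> s st.
have := pt; case/and3P=> /eqP cv _ n0.
have /set0Pn[h hs] : s != set0 by apply: contraNneq n0 => <-.
have hD : h \in D by rewrite -cv; apply/bigcupP; exists s.
rewrite (sP_uniq hP (subsetP sub s st) hs).
exact: blk_in pt' sub' hD.
Qed.

Lemma tauP_uniq t t' s : t \in tauP eps P -> t' \in tauP eps P -> s \in t -> s \in t' ->
  t = t'.
Proof.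
move=> /tauP_E[v [pt _ sub]] /tauP_E[v' [pt' _ sub']] st st'.
have := pt; case/and3P=> /eqP cv _ n0.
have /set0Pn[h hs] : s != set0 by apply: contraNneq n0 => <-.
have hv : h \in hedges_at eps v by rewrite -cv; apply/bigcupP; exists s.
have := pt'; case/and3P=> /eqP cv' _ _.
have hv' : h \in hedges_at eps v' by rewrite -cv'; apply/bigcupP; exists s.
move: hv hv'; rewrite !inE => /eqP ev /eqP ev'; subst v v'.
by apply/eqP; rewrite eqEsubset (tauP_sub pt pt') // (tauP_sub pt' pt).
Qed.

Lemma tch_tail_eq o t s : t \in tauP eps P -> s \in t -> tch_tail eps o P s = (o t != s).
Proof.
move=> tT st; apply/existsP/idP => [[t' /andP[t'T /andP[st' ne]]]|ne].
  by rewrite (tauP_uniq tT t'T st st').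
by exists t; rewrite tT st.
Qed.
End S.


Definition ind (b : bool) : rat := if b then 1 else 0.

Lemma pure (T : finType) (t : {set T}) x y ot (tt : bool) :
  #|t| = 2%N -> ot \in t -> (x \in t) = (y \in t) -> (x \in t -> tt = (ot != x)) ->
  (if x != y then (if [set x; y] == t then (if tt then 1 else -1) else 0) else 0)
   = ind (y == ot) - ind (x == ot) :> rat.
Proof.
move=> c2 ot_t exy htt.
have [<-|nxy] := eqVneq x y; first by rewrite subrr.
case xt: (x \in t).
- have yt : y \in t by rewrite -exy.
  have Et : [set x; y] = t.
    apply/eqP; rewrite eqEcard c2 cards2 nxy leqnn andbT.
    by apply/subsetP=> z; rewrite !inE => /orP[] /eqP ->.
  rewrite Et eqxx (htt xt).
  move: ot_t; rewrite -Et !inE => /orP[] /eqP ->.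
  + by rewrite eqxx eq_sym (negbTE nxy) /ind /= sub0r.
  + by rewrite eqxx eq_sym (negbTE nxy) /ind /= subr0.
- have Nt : [set x; y] != t by apply/eqP => E; rewrite -E !inE eqxx in xt.
  rewrite /= (negbTE Nt).
  have yt : y \notin t by rewrite -exy xt.
  have -> : (y == ot) = false by apply/eqP => E; rewrite E ot_t in yt.
  have -> : (x == ot) = false by apply/eqP => E; rewrite E ot_t in xt.
  by rewrite /ind subrr.
Qed.

Lemma sigma_pi (T : finType) (H : finType) (tl : pred T) (f : H -> T) (W : seq (H * H)) t :
  sigmaV tl [seq (f p.1, f p.2) | p <- [seq p <- W | f p.1 != f p.2]] t =
  \sum_(p <- W) (if f p.1 != f p.2 then
     (if [set f p.1; f p.2] == t then (if tl (f p.1) then 1 else -1) else 0) else 0).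
Proof. by rewrite /sigmaV big_map big_filter big_mkcond. Qed.


Lemma set1_eqE (T : finType) (a h : T) : ([set a] == [set h]) = (h == a).
Proof.
apply/eqP/eqP => [/setP E|->] //.
by have := E a; rewrite !inE eqxx => /esym/eqP ->.
Qed.

Lemma delta_edge (H : finType) (mate : H -> H) (tl : pred H) (o : {set {set H}} -> {set H}) t a :
  is_graph mate -> directed_version mate tl ->
  (if tl a then 1 else -1) * Delta tl o [set a; mate a] t
   = ind (a \in o t) - ind (mate a \in o t).
Proof.
move=> [_ nf] hD; rewrite /Delta.
have na : a != mate a by rewrite eq_sym nf.
have sq b : (if b then 1 else -1) * (if b then 1 else -1) = 1 :> rat.
  by case: b; rewrite ?mulrNN mulr1.
case ia: (a \in o t); case ima: (mate a \in o t).
- rewrite big_pred0 ?mulr0 /ind ?subrr // => h.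
  apply/negbTE/eqP => /setP E; have := E a; have := E (mate a).
  rewrite !inE ia ima !eqxx orbT /= => /esym/eqP e1 /esym/eqP e2.
  by rewrite e1 e2 eqxx in na.
- have S1 : [set a; mate a] :&: o t = [set a].
    apply/setP=> z; rewrite !inE; case: (eqVneq z a) => [->|nz]; first by rewrite ia.
    by case: (eqVneq z (mate a)) => [->|]; rewrite ?ima ?andbF.
  rewrite S1 (big_pred1 a) ?sq /ind ?subr0 // => h /=.
  by rewrite set1_eqE.
- have S1 : [set a; mate a] :&: o t = [set mate a].
    apply/setP=> z; rewrite !inE; case: (eqVneq z (mate a)) => [->|nz]; first by rewrite ima orbT.
    by case: (eqVneq z a) => [->|]; rewrite ?ia ?andbF.
  rewrite S1 (big_pred1 (mate a)) ?hD /ind ?sub0r; last by move=> h /=; rewrite set1_eqE.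
  by case: (tl a); rewrite /= ?mulrN ?mulNr ?mulr1 ?opprK.
- rewrite big_pred0 ?mulr0 /ind ?subrr // => h.
  apply/negbTE/eqP => /setP E; have := E h.
  rewrite !inE eqxx => /andP[/orP[] /eqP hh hin].
  - by rewrite hh ia in hin.
  - by rewrite hh ima in hin.
Qed.


Lemma trav_all (V H : finType) (mate : H -> H) (eps : H -> V) W :
  closed_walk mate eps W -> all [pred q : H * H | mate q.1 == q.2] (walk_trav W).
Proof.
case/andP=> _; case: W => [|z s] //= cyc.
rewrite /walk_trav /= rot1_cons; exact: trav_mate cyc.
Qed.

Lemma sum_zip1 (T : eqType) (F : T -> rat) (s1 s2 : seq T) :
  size s1 = size s2 -> \sum_(q <- zip s1 s2) F q.1 = \sum_(x <- s1) F x.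
Proof. by move=> e; rewrite -[in RHS](unzip1_zip (eq_leq e)) big_map. Qed.

Lemma sum_zip2 (T : eqType) (F : T -> rat) (s1 s2 : seq T) :
  size s1 = size s2 -> \sum_(q <- zip s1 s2) F q.2 = \sum_(x <- s2) F x.
Proof. by move=> e; rewrite -[in RHS](@unzip2_zip _ _ s1 s2) ?e // big_map. Qed.

Lemma lhs_sum (V H : finType) (mate : H -> H) (eps : H -> V) (tl : pred H)
  (o : {set {set H}} -> {set H}) t W :
  is_graph mate -> directed_version mate tl -> closed_walk mate eps W ->
  \sum_(e in edges mate) sigmaV tl (walk_trav W) e * Delta tl o e t
  = \sum_(p <- W) (ind (p.2 \in o t) - ind (p.1 \in o t)).
Proof.
move=> hF hD hW; rewrite /sigmaV.
under eq_bigr do rewrite big_distrl.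
rewrite exchange_big /=.
transitivity (\sum_(q <- walk_trav W) (ind (q.1 \in o t) - ind (q.2 \in o t))).
  apply: eq_big_seq => q qin.
  have /eqP mq : mate q.1 == q.2 by have /allP := trav_all hW; apply.
  rewrite (bigD1 [set q.1; q.2]) /=; last by rewrite -mq; apply/imsetP; exists q.1.
  rewrite big1 ?addr0; last first.
    by move=> e /andP[_ ne]; rewrite eq_sym (negbTE ne) mul0r.
  by rewrite eqxx -mq delta_edge.
have sz : size (unzip2 W) = size (rot 1 (unzip1 W)) by rewrite size_rot !size_map.
rewrite /walk_trav sumrB (sum_zip1 (fun x => ind (x \in o t)) sz).
rewrite (sum_zip2 (fun x => ind (x \in o t)) sz).
have pr : perm_eq (rot 1 (unzip1 W)) (unzip1 W) by rewrite perm_rot.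
by rewrite (perm_big _ pr) !big_map sumrB.
Qed.

Unset Implicit Arguments.

Theorem mainTheorem4 (V H : finType) (mate : H -> H) (eps : H -> V)
    (hF : is_graph mate) (h4 : four_regular eps)
    (tl : pred H) (hD : directed_version mate tl)
    (o : {set {set H}} -> {set H}) (ho : transitional_orientation eps o)
    (P : seq (seq (H * H))) (hP : circuit_partition mate eps P)
    (W : seq (H * H)) (hW : closed_walk mate eps W) :
  forall t : {set {set H}}, t \in tauP eps P ->
    \sum_(e in edges mate) sigmaV tl (walk_trav W) e * Delta tl o e t
    = sigmaV (tch_tail eps o P) (pi_walk P W) t.
Proof.
move=> t tT.
rewrite (@lhs_sum V H mate eps tl o t W hF hD hW) /pi_walk sigma_pi.
have [v [pt c2 sub]] := tauP_E tT.
have ot_t : o t \in t by apply: ho; move: tT; rewrite inE => /andP[].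
have ot_S : o t \in SP P := subsetP sub _ ot_t.
have conv h : (h \in o t) = (sP P h == o t).
  apply/idP/eqP => [hin|<-]; first by rewrite -(sP_uniq hP ot_S hin).
  by case: (sP_spec hP h).
have inT h : (sP P h \in t) = (eps h == v).
  apply/idP/idP => [/(blk_out hP pt)|hv]; first by rewrite inE.
  by apply: (blk_in hP pt sub); rewrite inE.
apply: eq_big_seq => -[a b] pW.
have /andP[/= nab /eqP eab] : dst eps (a, b) by case/andP: hW => /allP hA _; exact: hA pW.
rewrite /= !conv; symmetry.
apply: pure => //; first by rewrite !inT eab.
by move=> st; exact: (tch_tail_eq hP o tT st).
Qed.
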